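(* Every point $(X_1,X_2,A)\in\mathbb C^2\times\mathbb R$ satisfying $$-2\,\mathrm{Re}(X_1+X_2)-2\,\mathrm{Re}\bigl(X_1\overline{X}_2e^{-2iA}\bigr)+|X_1|^2+|X_2|^2+1=0$$ with $-\pi/2<A<\pi/2$ satisfies $\mathrm{Re}(X_1e^{-iA})\ge0$. *)

(* Defs.v *)
From Stdlib Require Import Reals.
From Coquelicot Require Export Coquelicot.
Open Scope R_scope.

Definition cexpi (t : R) : C := (cos t, sin t).

(* Main.v *)
Require Import Defs.
From Stdlib Require Import Reals Lra Psatz.
From Coquelicot Require Import Coquelicot.
Open Scope R_scope.

Theorem proposition3p10 (X1 X2 : C) (A : R) :
  - PI / 2 < A < PI / 2 ->
  -2 * Re (X1 + X2)%C - 2 * Re (X1 * Cconj X2 * cexpi (-2 * A))%C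
    + Cmod X1 ^ 2 + Cmod X2 ^ 2 + 1 = 0 ->
  0 <= Re (X1 * cexpi (- A))%C.
Proof.
  intros HA H.
  assert (Hc : 0 < cos A) by (apply cos_gt_0; lra).
  pose proof (sin2_cos2 A) as Hsc. unfold Rsqr in Hsc.
  destruct X1 as [a1 b1], X2 as [a2 b2].
  unfold Cmod in H. simpl fst in H. simpl snd in H.
  rewrite !pow2_sqrt in H by nra.
  unfold cexpi in *.
  replace (-2 * A) with (- (2 * A)) in H by ring.
  rewrite cos_neg, sin_neg, cos_2a, sin_2a in H.
  rewrite cos_neg, sin_neg.
  simpl in *. unfold Cplus, Cmult, Cconj in *. simpl in *.
  set (c := cos A) in *. set (s := sin A) in *.
  set (a := a1 * c + b1 * s).
  set (b := b1 * c - a1 * s).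
  set (p := a2 * c - b2 * s).
  set (q := b2 * c + a2 * s).
  assert (E : 4 * c * a = (a - p + c)^2 + (b - q + s)^2).
  { subst a b p q.
    assert (D : (a1 * c + b1 * s - (a2 * c - b2 * s) + c) ^ 2 +
  (b1 * c - a1 * s - (b2 * c + a2 * s) + s) ^ 2 - 4 * c * (a1 * c + b1 * s)
  - (-2 * (a1 + a2) -
    2 *
    ((a1 * a2 - b1 * - b2) * (c * c - s * s) -
     (a1 * - b2 + b1 * a2) * - (2 * s * c)) +
    (a1 * (a1 * 1) + b1 * (b1 * 1)) + (a2 * (a2 * 1) + b2 * (b2 * 1)) + 1)
   = (a1^2+b1^2+a2^2+b2^2-2*a1-2*a2+1) * (s*s+c*c-1)) by ring.
    rewrite H, Hsc in D. lra. }
  assert (0 <= (a - p + c)^2 + (b - q + s)^2) by (apply Rplus_le_le_0_compat; apply pow2_ge_0).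
  replace (a1 * c - b1 * - s) with a by (subst a; ring).
  nra.
Qed.
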